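(* There is a reference point $(r_1,r_2)$ with $r_1\le -1$ and $r_2\le -1$ such that SEMO with the hypervolume contribution (w.r.t. this reference point) and NMUAR parent selection has a positive probability of stagnating, i.e. of never covering the whole Pareto front, on \textsc{OneMinMax} and on \textsc{LOTZ}.
   Context: Search space $\{0,1\}^n$; objectives maximised. $\textsc{OneMinMax}(x)=(\sum_ix_i,\,n-\sum_ix_i)$ (every point Pareto optimal). $\textsc{LOTZ}(x)=(\mathrm{LO}(x),\mathrm{TZ}(x))$, number of leading ones and trailing zeros; Pareto set $\{1^i0^{n-i}\}$. Dominance: $y$ dominates $x$ if $f_i(y)\ge f_i(x)$ for all $i$, strictly for some $i$; weakly dominates if $\ge$ in all. SEMO with diversity-based parent selection: start with uniform random $s$, $P=\{s\}$. Each iteration: compute the diversity score of each $x\in P$ w.r.t. $P$; choose a parent by the selection mechanism; create $s'$ by flipping one uniformly random bit; if $s'$ is not dominated by any member of $P$, add it and remove all members weakly dominated by $s'$. NMUAR: if the individuals of $P$ do not all have the same score, discard all with minimum score and select uniformly at random among the remaining; otherwise select uniformly at random from $P$. HVC with reference point $(r_1,r_2)$: sort population by increasing $f_1$ as $x_1,\dots,x_\mu$, set $f_1(x_0)=r_1$, $f_2(x_{\mu+1})=r_2$, $\mathrm{HVC}(x_i,P)=(f_1(x_i)-f_1(x_{i-1}))(f_2(x_i)-f_2(x_{i+1}))$. *)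

(* Defs.v *)
(* Probabilities are rationals (all quantities here are rational). *)
From HB Require Import structures.
From mathcomp Require Import all_boot all_order all_algebra.
Set Implicit Arguments. Unset Strict Implicit. Unset Printing Implicit Defensive.
Import Order.TTheory GRing.Theory Num.Theory.

Definition bs (n : nat) := {ffun 'I_n -> bool}.
Definition obj := (nat * nat)%type.

Definition dominates (a b : obj) : bool :=
  [&& (b.1 <= a.1)%N, (b.2 <= a.2)%N & ((b.1 < a.1)%N || (b.2 < a.2)%N)].
Definition wdominates (a b : obj) : bool := (b.1 <= a.1)%N && (b.2 <= a.2)%N.

Definition ones n (x : bs n) : nat := (\sum_(i < n) (x i : nat))%N.
Definition OneMinMax n (x : bs n) : obj := (ones x, n - ones x)%N.

Definition LO n (x : bs n) : nat :=
  (\max_(k < n.+1 | [forall j : 'I_n, (j < k)%N ==> x j]) k)%N.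
Definition TZ n (x : bs n) : nat :=
  (\max_(k < n.+1 | [forall j : 'I_n, (n - k <= j)%N ==> ~~ x j]) k)%N.
Definition LOTZ n (x : bs n) : obj := (LO x, TZ x).

Definition flip n (x : bs n) (i : 'I_n) : bs n :=
  [ffun j => if j == i then ~~ x j else x j].

Definition pareto_set n (f : bs n -> obj) : {set bs n} :=
  [set x | [forall y, ~~ dominates (f y) (f x)]].
Definition covers n (f : bs n -> obj) (P : {set bs n}) : bool :=
  [forall y in pareto_set f, [exists x in P, f x == f y]].

Local Open Scope ring_scope.

Definition sorted_pop n (f : bs n -> obj) (P : {set bs n}) : seq (bs n) :=
  sort (fun x y => ((f x).1 <= (f y).1)%N) (enum P).

Definition HVC n (f : bs n -> obj) (r1 r2 : rat) (P : {set bs n}) (x : bs n) : rat :=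
  let s := sorted_pop f P in
  let i := index x s in
  let prev := if i is i'.+1 then ((f (nth x s i')).1)%:R else r1 in
  let next := if (i.+1 < size s)%N then ((f (nth x s i.+1)).2)%:R else r2 in
  (((f x).1)%:R - prev) * (((f x).2)%:R - next).

Definition nmuar_pool n (score : bs n -> rat) (P : {set bs n}) : {set bs n} :=
  if [forall x in P, forall y in P, score x == score y] then P
  else [set x in P | [exists y in P, score y < score x]].
Definition nmuar_sel n (score : bs n -> rat) (P : {set bs n}) (x : bs n) : rat :=
  if x \in nmuar_pool score P then 1 / (#|nmuar_pool score P|)%:R else 0.

Definition update n (f : bs n -> obj) (P : {set bs n}) (s' : bs n) : {set bs n} :=
  if [exists y in P, dominates (f y) (f s')] then P
  else s' |: [set y in P | ~~ wdominates (f s') (f y)].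

Definition step n (f : bs n -> obj) (r1 r2 : rat) (P Q : {set bs n}) : rat :=
  \sum_(x in P) nmuar_sel (HVC f r1 r2 P) P x *
     \sum_(i < n) (1 / n%:R) * (nat_of_bool (update f P (flip x i) == Q))%:R.

Definition init n (P : {set bs n}) : rat :=
  \sum_(s : bs n) (1 / (2 ^ n)%N%:R) * (nat_of_bool (P == [set s]))%:R.

(* uncov t P = probability that the population after t iterations is P and
   that the Pareto front was not covered at any of the times 0, ..., t *)
Fixpoint uncov n (f : bs n -> obj) (r1 r2 : rat) (t : nat) (P : {set bs n}) : rat :=
  match t with
  | 0 => init P * (nat_of_bool (~~ covers f P))%:R
  | t'.+1 => (nat_of_bool (~~ covers f P))%:R *
             \sum_(Q : {set bs n}) uncov f r1 r2 t' Q * step f r1 r2 Q P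
  end.

Definition not_covered_upto n (f : bs n -> obj) (r1 r2 : rat) (t : nat) : rat :=
  \sum_(P : {set bs n}) uncov f r1 r2 t P.

(* positive probability of never covering the Pareto front: the (decreasing)
   probabilities of not covering up to time t are bounded below by some eps > 0,
   i.e. their limit -- the probability of never covering -- is positive *)
Definition stagnates_with_pos_prob n (f : bs n -> obj) (r1 r2 : rat) : Prop :=
  exists eps : rat, 0 < eps /\ forall t : nat, eps <= not_covered_upto f r1 r2 t.

(* Main.v *)
Require Import Defs.
From mathcomp Require Import all_boot all_order all_algebra.
From mathcomp Require Import ring lra zify.
Import Order.TTheory GRing.Theory Num.Theory.
Local Open Scope ring_scope.

Definition zz n : bs n := [ffun _ => false].

Definition inT n (f : bs n -> obj) (P : {set bs n}) : bool :=
  (P == [set zz n]) || [exists y, [&& P == [set zz n; y], y != zz n & f y == (1, n - 1)%N]].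

Lemma sorted2 n (f : bs n -> obj) (a b : bs n) :
  ((f a).1 < (f b).1)%N -> sorted_pop f [set a; b] = [:: a; b].
Proof.
move=> lt; have ab : a != b by apply/eqP=> E; move: lt; rewrite E ltnn.
rewrite /sorted_pop.
have -> : sort (fun x y => ((f x).1 <= (f y).1)%N) (enum [set a; b])
   = sort (fun x y => ((f x).1 <= (f y).1)%N) [:: a; b].
  apply/esym/perm_sort_inP.
  - by move=> x y _ _; apply: leq_total.
  - by move=> x y w _ _ _; apply: leq_trans.
  - move=> x y; rewrite !inE => /orP[]/eqP-> /orP[]/eqP-> //=;
    move=> /andP[h1 h2]; exfalso; lia.
  apply: uniq_perm; first by rewrite /= inE ab.
  - exact: enum_uniq.
  by move=> x; rewrite mem_enum !inE.
apply: sorted_sort; first by move=> x y w; apply: leq_trans.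
by rewrite /= andbT ltnW.
Qed.
Arguments inT {n}.

Definition R1 n : rat := - (n.+1)%:R.
Definition R2 : rat := -1.

Lemma HVC_vals n (f : bs n -> obj) y : (1 <= n)%N -> f (zz n) = (0, n)%N -> f y = (1, n - 1)%N ->
  HVC f (R1 n) R2 [set zz n; y] (zz n) = (n.+1)%:R /\
  HVC f (R1 n) R2 [set zz n; y] y = n%:R.
Proof.
move=> n1 fz fy.
have zy : zz n != y by apply/eqP=> E; move: fz; rewrite E fy => -[].
rewrite /HVC sorted2; last by rewrite fz fy.
rewrite /= eqxx /= (negbTE (zy)) /= eqxx fz fy /= /R1 /R2.
rewrite natrB // -addn1 natrD; split; ring.
Qed.

Lemma sel_sum n (f : bs n -> obj) Q (g : bs n -> rat) : (1 <= n)%N -> f (zz n) = (0, n)%N ->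
  inT f Q ->
  \sum_(x in Q) nmuar_sel (HVC f (R1 n) R2 Q) Q x * g x = g (zz n).
Proof.
move=> n1 fz /orP[/eqP->|/existsP[y /and3P[/eqP-> yz /eqP fy]]].
  rewrite big_set1 /nmuar_sel /nmuar_pool.
  have -> : [forall x in [set zz n], forall y in [set zz n],
     HVC f (R1 n) R2 [set zz n] x == HVC f (R1 n) R2 [set zz n] y].
    apply/forallP=> x; apply/implyP; rewrite in_set1 => /eqP->.
    apply/forallP=> y; apply/implyP; rewrite in_set1 => /eqP->; exact: eqxx.
  by rewrite set11 cards1 divr1 mul1r.
have [hz hy] := @HVC_vals n f y n1 fz fy.

set sc := HVC f (R1 n) R2 [set zz n; y].
have pool : nmuar_pool sc [set zz n; y] = [set zz n].
  rewrite /nmuar_pool.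
  have -> : [forall x in [set zz n; y], forall y0 in [set zz n; y], sc x == sc y0] = false.
    apply/negbTE/forallP => H.
    move: (H (zz n)); rewrite !inE eqxx /= => /forallP/(_ y); rewrite !inE eqxx orbT /=.
    by rewrite /sc hz hy eqr_nat; lia.
  apply/setP=> x; rewrite !inE.
  have [->|xz] := eqVneq x (zz n); rewrite /=.
    by apply/existsP; exists y; rewrite !inE eqxx orbT /= /sc hz hy ltr_nat.
  case: eqVneq => [->|//] /=.
  apply/negbTE/existsP => -[w]; rewrite !inE => /andP[/orP[]/eqP-> ].
    by rewrite /sc hz hy ltr_nat ltnNge leqnSn.
  by rewrite ltxx.
rewrite big_setU1 /=; last by rewrite inE eq_sym.
rewrite big_set1 /nmuar_sel pool !inE eqxx (negbTE yz) cards1 divr1 mul1r mul0r addr0.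
done.
Qed.
Set Implicit Arguments. Unset Strict Implicit.

Lemma inT_mem n (f : bs n -> obj) Q : inT f Q ->
  zz n \in Q /\ forall w, w \in Q -> w = zz n \/ f w = (1, n - 1)%N.
Proof.
move=> /orP[/eqP->|/existsP[y /and3P[/eqP-> yz /eqP fy]]].
  by split; [rewrite set11 | move=> w; rewrite in_set1 => /eqP; left].
split; first by rewrite !inE eqxx.
by move=> w; rewrite !inE => /orP[]/eqP->; [left|right].
Qed.

Lemma flip_neq n (i : 'I_n) : flip (zz n) i != zz n.
Proof. by apply/eqP => /ffunP/(_ i); rewrite !ffunE eqxx. Qed.

Lemma update_T n (f : bs n -> obj) Q i : (1 <= n)%N -> f (zz n) = (0, n)%N -> inT f Q ->
  (f (flip (zz n) i) = (1, n - 1)%N \/ dominates (0, n)%N (f (flip (zz n) i))) ->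
  inT f (update f Q (flip (zz n) i)).
Proof.
move=> n1 fz QT; have [zQ Qm] := inT_mem QT.
rewrite /update => -[fs|dom].
  have -> : [exists y in Q, dominates (f y) (f (flip (zz n) i))] = false.
    apply/negbTE/existsP => -[w /andP[/Qm [->|->]]]; rewrite ?fz fs /dominates /=.
      done.
    by rewrite ltnn andbF.
  have -> : [set y in Q | ~~ wdominates (f (flip (zz n) i)) (f y)] = [set zz n].
    apply/setP => w; rewrite !inE; case: eqVneq => [->|wz]; rewrite ?zQ /=.
      by rewrite fz fs /wdominates /=; lia.
    case wQ: (w \in Q) => //=; case: (Qm _ wQ) => [E|->]; first by rewrite E eqxx in wz.
    by rewrite fs /wdominates /= !leqnn.
  apply/orP; right; apply/existsP; exists (flip (zz n) i).
  by rewrite flip_neq fs eqxx setUC eqxx.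
have -> : [exists y in Q, dominates (f y) (f (flip (zz n) i))].
  by apply/existsP; exists (zz n); rewrite zQ fz.
exact: QT.
Qed.

Lemma uncov_ge0 n (f : bs n -> obj) r1 r2 t P : 0 <= uncov f r1 r2 t P.
Proof.
elim: t P => [|t IH] P /=.
  apply: mulr_ge0 => //; rewrite /init; apply: sumr_ge0 => s _; apply: mulr_ge0 => //; by rewrite ?mul1r invr_ge0 ler0n.
apply: mulr_ge0 => //; apply: sumr_ge0 => Q _; apply: mulr_ge0 => //.
rewrite /step; apply: sumr_ge0 => x _; apply: mulr_ge0.
  by rewrite /nmuar_sel; case: ifP => _ //; rewrite mul1r invr_ge0 ler0n.
by apply: sumr_ge0 => i _; apply: mulr_ge0 => //; rewrite ?mul1r invr_ge0 ler0n.
Qed.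

Lemma step_ge0 n (f : bs n -> obj) r1 r2 Q P : 0 <= step f r1 r2 Q P.
Proof.
rewrite /step; apply: sumr_ge0 => x _; apply: mulr_ge0.
  by rewrite /nmuar_sel; case: ifP => _ //; rewrite mul1r invr_ge0 ler0n.
by apply: sumr_ge0 => i _; apply: mulr_ge0 => //; rewrite ?mul1r invr_ge0 ler0n.
Qed.

Lemma sub_sum (T : finType) (a : pred T) (F : T -> rat) :
  (forall i, 0 <= F i) -> \sum_(i | a i) F i <= \sum_i F i.
Proof.
move=> F0; rewrite [X in _ <= X](bigID a) /= lerDl.
by apply: sumr_ge0 => i _.
Qed.

Lemma stag n (f : bs n -> obj) : (1 <= n)%N -> f (zz n) = (0, n)%N ->
  (forall i, f (flip (zz n) i) = (1, n - 1)%N \/ dominates (0, n)%N (f (flip (zz n) i))) ->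
  (exists w, [/\ w \in pareto_set f, f w != (0, n)%N & f w != (1, n - 1)%N]) ->
  stagnates_with_pos_prob f (R1 n) R2.
Proof.
move=> n1 fz ffl [w [wP w1 w2]].
have notcov P : inT f P -> ~~ covers f P.
  move=> PT; have [_ Pm] := inT_mem PT.
  apply/negP => /forallP/(_ w)/implyP/(_ wP)/existsP[x /andP[xP /eqP fx]].
  by case: (Pm _ xP) => [E|E]; move: fx; rewrite ?E ?fz => fx; rewrite -fx ?eqxx in w1 w2.
have stepsum Q : inT f Q -> \sum_(P | inT f P) step f (R1 n) R2 Q P = 1.
  move=> QT; rewrite /step exchange_big /=. Show.
  under eq_bigr do rewrite -mulr_sumr.
  rewrite sel_sum // exchange_big /=.
  have -> : \sum_(i < n) \sum_(P | inT f P)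
      (1 / n%:R : rat) * (update f Q (flip (zz n) i) == P)%:R = \sum_(i < n) (1 / n%:R : rat).
    apply: eq_bigr => i _; rewrite -mulr_sumr.
    rewrite (bigD1 (update f Q (flip (zz n) i))) /=; last exact: update_T.
    rewrite eqxx big1 ?addr0 ?mulr1 // => P /andP[_ /negbTE]; rewrite eq_sym => ->.
    done.
  rewrite sumr_const card_ord div1r -(mulr_natl (n%:R^-1)) mulfV //.
  by rewrite pnatr_eq0 -lt0n.
have mass t : 1 / (2 ^ n)%N%:R <= \sum_(P | inT f P) uncov f (R1 n) R2 t P.
  elim: t => [|t IH].
    rewrite (bigD1 [set zz n]) /=; last by rewrite /inT eqxx.
    rewrite -[X in X <= _]addr0; apply: lerD; last by apply: sumr_ge0 => P _; exact: (uncov_ge0 f (R1 n) R2 0 P).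
    rewrite /= (negbTE (notcov _ _)) ?mulr1; last by rewrite /inT eqxx.
    rewrite /init (bigD1 (zz n)) //= eqxx mulr1 big1 ?addr0 // => s sz.
    have -> : ([set zz n] == [set s]) = false.
      apply/negbTE/eqP => E; have : zz n \in [set s] by rewrite -E set11.
      by rewrite in_set1 eq_sym (negbTE sz).
    by rewrite mulr0.
  apply: (le_trans IH).
  have -> : \sum_(P | inT f P) uncov f (R1 n) R2 t.+1 P =
            \sum_(P | inT f P) \sum_Q uncov f (R1 n) R2 t Q * step f (R1 n) R2 Q P.
    by apply: eq_bigr => P PT /=; rewrite (negbTE (notcov _ PT)) mul1r.
  apply: le_trans (ler_sum _ (fun P _ => sub_sum (fun Q => inT f Q) _)); last first.
    by move=> P _ Q; apply: mulr_ge0; [apply: uncov_ge0 | apply: step_ge0].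
  rewrite exchange_big /=; apply: ler_sum => Q QT.
  by rewrite -mulr_sumr stepsum // mulr1.
exists (1 / (2 ^ n)%N%:R); split.
  by rewrite mul1r invr_gt0 ltr0n expn_gt0.
move=> t; apply: le_trans (mass t) _.
by rewrite /not_covered_upto; apply: sub_sum => P; apply: uncov_ge0.
Qed.

Definition oo n : bs n := [ffun _ => true].

Lemma flipE n (i j : 'I_n) : flip (zz n) i j = (j == i).
Proof. by rewrite !ffunE; case: eqP. Qed.

Lemma ones_le n (x : bs n) : (ones x <= n)%N.
Proof.
rewrite /ones; apply: leq_trans (_ : (\sum_(i < n) 1 <= n)%N).
  by apply: leq_sum => i _; apply: leq_b1.
by rewrite sum1_card card_ord.
Qed.

Lemma OMM_stag n : (2 <= n)%N -> stagnates_with_pos_prob (@OneMinMax n) (R1 n) R2.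
Proof.
move=> n2; apply: stag; first by apply: leq_trans n2.
- by rewrite /OneMinMax /ones big1 ?subn0 // => i _; rewrite ffunE.
- move=> i; left; rewrite /OneMinMax /ones (bigD1 i) //= flipE eqxx big1 ?addn0 //.
  by move=> j /negbTE; rewrite flipE => ->.
exists (oo n).
have hoo : ones (oo n) = n by rewrite /ones (eq_bigr (fun _ => 1%N)) ?sum1_card ?card_ord // => i _; rewrite ffunE.
rewrite /OneMinMax hoo subnn; split.
- rewrite inE; apply/forallP => y; rewrite /dominates /=; have := ones_le y; lia.
- by apply/eqP => -[]; lia.
- by apply/eqP => -[]; lia.
Qed.

Lemma LO_ub n (x : bs n) m :
  (forall k : 'I_n.+1, [forall j : 'I_n, (j < k)%N ==> x j] -> (k <= m)%N) -> (LO x <= m)%N.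
Proof. by move=> H; apply/bigmax_leqP => k; apply: H. Qed.
Lemma LO_lb n (x : bs n) (k : 'I_n.+1) :
  [forall j : 'I_n, (j < k)%N ==> x j] -> (k <= LO x)%N.
Proof. move=> H; rewrite /LO; exact: (@leq_bigmax_cond _ (fun k : 'I_n.+1 => [forall j : 'I_n, (j < k)%N ==> x j]) (fun k => nat_of_ord k) k H). Qed.
Lemma TZ_ub n (x : bs n) m :
  (forall k : 'I_n.+1, [forall j : 'I_n, (n - k <= j)%N ==> ~~ x j] -> (k <= m)%N) -> (TZ x <= m)%N.
Proof. by move=> H; apply/bigmax_leqP => k; apply: H. Qed.
Lemma TZ_lb n (x : bs n) (k : 'I_n.+1) :
  [forall j : 'I_n, (n - k <= j)%N ==> ~~ x j] -> (k <= TZ x)%N.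
Proof. move=> H; rewrite /TZ; exact: (@leq_bigmax_cond _ (fun k : 'I_n.+1 => [forall j : 'I_n, (n - k <= j)%N ==> ~~ x j]) (fun k => nat_of_ord k) k H). Qed.
Lemma LO_le n (x : bs n) : (LO x <= n)%N.
Proof. by apply: LO_ub => k _; rewrite -ltnS ltn_ord. Qed.
Lemma TZ_le n (x : bs n) : (TZ x <= n)%N.
Proof. by apply: TZ_ub => k _; rewrite -ltnS ltn_ord. Qed.

Lemma LOTZ_stag n : (2 <= n)%N -> stagnates_with_pos_prob (@LOTZ n) (R1 n) R2.
Proof.
move=> n2.
have n0 : (0 < n)%N by apply: leq_trans n2.
have n11 : (1 < n)%N by [].
have nl : (n - 1 < n)%N by lia.
pose j0 : 'I_n := Ordinal n0.
pose j1 : 'I_n := Ordinal n11.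
pose jl : 'I_n := Ordinal nl.
apply: stag => //.
- rewrite /LOTZ; congr pair.
    apply/eqP; rewrite -leqn0; apply: LO_ub => k /forallP/(_ j0)/implyP.
    by rewrite ffunE /=; case: k => -[|k] //= kn /(_ isT).
  apply/eqP; rewrite eqn_leq TZ_le /=.
  by apply: (TZ_lb (k := ord_max)); apply/forallP => j; rewrite ffunE implybT.
- move=> i; case: (eqVneq (val i) 0%N) => i0.
    have ij0 : i = j0 by apply: val_inj.
    left; rewrite /LOTZ; congr pair; apply/eqP; rewrite eqn_leq.
      apply/andP; split.
        apply: LO_ub => k /forallP/(_ j1)/implyP; rewrite flipE ij0 /=.
        by case: (ltnP 1 k) => // _ /(_ isT).
      have k1 : (1 < n.+1)%N by lia.
      apply: (LO_lb (k := Ordinal k1)); apply/forallP => j /=; apply/implyP => j1'.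
      by rewrite flipE ij0; apply/eqP/val_inj => /=; lia.
    apply/andP; split.
      apply: TZ_ub => k /forallP/(_ j0)/implyP; rewrite flipE ij0 eqxx /=.
      have := ltn_ord k; case: (ltnP (n - 1) k) => // kk kn H.
      by have := H ltac:(lia).
    have k1 : (n - 1 < n.+1)%N by lia.
    apply: (TZ_lb (k := Ordinal k1)); apply/forallP => j /=; apply/implyP => jj.
    rewrite flipE ij0; apply/negP => /eqP E; move: jj; rewrite E /=; lia.
  right; rewrite /LOTZ /dominates /=.
  have h1 : (LO (flip (zz n) i) <= 0)%N.
    apply: LO_ub => k /forallP/(_ j0)/implyP; rewrite flipE.
    have -> : (j0 == i) = false by apply/negbTE/eqP => E; rewrite -E in i0.
    by case: k => -[|k] //= kn /(_ isT).
  have h2 : (TZ (flip (zz n) i) <= n - 1)%N.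
    apply: TZ_ub => k /forallP/(_ i)/implyP; rewrite flipE eqxx /=.
    have := ltn_ord k; case: (ltnP (n - 1) k) => // kk kn H.
    by have := H ltac:(lia).
  have := TZ_le (flip (zz n) i); lia.
exists (oo n).
have hLO : LO (oo n) = n.
  apply/eqP; rewrite eqn_leq LO_le /=.
  by apply: (LO_lb (k := ord_max)); apply/forallP => j; rewrite ffunE implybT.
have hTZ : TZ (oo n) = 0%N.
  apply/eqP; rewrite -leqn0; apply: TZ_ub => k /forallP/(_ jl)/implyP; rewrite ffunE /=.
  by case: k => -[|k] //= kn H; have := H ltac:(lia).
rewrite /LOTZ hLO hTZ; split.
- rewrite inE; apply/forallP => y; rewrite /dominates /=.
  have := LO_le y; have := TZ_le y.
  case yl: (y jl).
    have : (TZ y <= 0)%N.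
      apply: TZ_ub => k /forallP/(_ jl)/implyP; rewrite yl /=.
      by case: k => -[|k] //= kn H; have := H ltac:(lia).
    lia.
  have : (LO y <= n - 1)%N.
    apply: LO_ub => k /forallP/(_ jl)/implyP; rewrite yl /=.
    have := ltn_ord k; case: (ltnP (n - 1) k) => // kk kn H.
    by have := H ltac:(lia).
  lia.
- by apply/eqP => -[]; lia.
- by apply/eqP => -[]; lia.
Qed.

Unset Implicit Arguments.

Theorem theorem10 : forall n : nat, (2 <= n)%N ->
  exists r1 r2 : rat, r1 <= -1 /\ r2 <= -1 /\
    stagnates_with_pos_prob (@OneMinMax n) r1 r2 /\
    stagnates_with_pos_prob (@LOTZ n) r1 r2.
Proof.
move=> n n2; exists (R1 n), R2; split.
  by rewrite /R1 lerN2 ler1n.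
split; first by rewrite /R2.
by split; [apply: OMM_stag | apply: LOTZ_stag].
Qed.
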